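(* Let $D$ be a finite offline dataset of transitions $(s,a,r,s')$ from an MDP $\langle \mathcal{S},\mathcal{A},\mathcal{R},\mathcal{P},\gamma\rangle$ with no terminal states, and let $\pi$ be a deterministic policy. Let $\mathcal{X}$, $R$, $\mathcal{X}'$ be the data matrices whose $k$-th rows are, respectively, $(s,a)$, $r$ and $(s',\pi(s'))$ for the $k$-th transition of $D$. Consider an ensemble of $Q$-networks $Q_{\theta^i}$ (indexed by $i$ ranging over a probability space $Z$), all having the same infinite-width, NTK-parameterized architecture and differing only in their initial weights $\theta^i$, which are drawn independently from the initial weight distribution; $\mathbb{E}$ and $\mathbb{V}$ denote expectation and variance over this draw. Let $\hat{\Theta}^{(0)}(A,B)=\nabla_\theta Q_{\theta^i}(A)\,\nabla_\theta Q_{\theta^i}(B)^T|_{t=0}$ be the (deterministic, member-independent) neural tangent kernel at initialization, and set $C := \hat{\Theta}^{(0)}(\mathcal{X}',\mathcal{X})\,\hat{\Theta}^{(0)}(\mathcal{X},\mathcal{X})^{-1}$. Write $Q^{(0)}_{\theta^i}$ for the network at initialization and $Q^{(t)}_{\theta^i}$ for the network after $t$ iterations of the following pessimistic policy evaluation procedure: at iteration $t+1$, targets $y^i$ are computed from the iteration-$t$ networks, and each network $Q_{\theta^i}$ is trained from its initialization by gradient descent (with a suitably small learning rate) to convergence on the mean squared error $\frac{1}{|D|}\sum_{(s,a,r,s')\in D}(Q_{\theta^i}(s,a)-y^i(r,s',\pi))^2$. Two choices of targets are considered: (Method 1, independent targets) $y^i = r + \gamma\, Q^{(t)}_{\theta^i}(s',\pi(s'))$;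 (Method 2, shared targets) $y^i = r + \gamma\big(\mathbb{E}[Q^{(t)}_{\theta^i}(s',\pi(s'))] - \sqrt{\mathbb{V}[Q^{(t)}_{\theta^i}(s',\pi(s'))]}\big)$, the same for all $i$. In both cases define $Q^{(t)}_{\mathrm{LCB}}(s,a) = \mathbb{E}[Q^{(t)}_{\theta^i}(s,a)] - \sqrt{\mathbb{V}[Q^{(t)}_{\theta^i}(s,a)]}$. Then, after $t+1$ iterations, with $1$ denoting the identity matrix and squares and square roots taken element-wise: for Method 1, $$Q^{(t+1)}_{\mathrm{LCB}}(\mathcal{X}') = \mathcal{O}(\gamma^t\|C\|^t) + (1+\gamma C+\dots+\gamma^t C^t)\,C R - \sqrt{\mathbb{E}\Big[\Big((1+\gamma C+\dots+\gamma^t C^t)\big(Q^{(0)}_{\theta^i}(\mathcal{X}') - C\,Q^{(0)}_{\theta^i}(\mathcal{X})\big)\Big)^2\Big]};$$ for Method 2, $$Q^{(t+1)}_{\mathrm{LCB}}(\mathcal{X}') = \mathcal{O}(\gamma^t\|C\|^t) + (1+\gamma C+\dots+\gamma^t C^t)\,C R - (1+\gamma C+\dots+\gamma^t C^t)\sqrt{\mathbb{E}\Big[\big(Q^{(0)}_{\theta^i}(\mathcal{X}') - C\,Q^{(0)}_{\theta^i}(\mathcal{X})\big)^2\Big]}.$$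
   Context: Notation such as $Q(\mathcal{X})$ means the column vector obtained by applying $Q$ to each row of $\mathcal{X}$. The NTK parameterization and infinite-width limit are in the sense of Jacot et al.; in this limit the kernel $\hat{\Theta}^{(0)}$ converges to a deterministic kernel, identical for all ensemble members. The paper assumes $\gamma\|C\|<1$ (if $\gamma\|C\|\ge 1$ the procedure may diverge), so that the $\mathcal{O}(\gamma^t\|C\|^t)$ term vanishes as $t\to\infty$. *)

(* Defs.v *)
From HB Require Import structures.
From mathcomp Require Import all_boot all_order all_algebra.
From mathcomp Require Import all_classical all_reals all_analysis.
Set Implicit Arguments. Unset Strict Implicit. Unset Printing Implicit Defensive.
Import Order.TTheory GRing.Theory Num.Theory.
Local Open Scope ring_scope.

Section Defs.
Variables (S A : Type) (R : realType).

Record transition := Tr { tr_s : S; tr_a : A; tr_r : R; tr_s' : S }.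

Definition dataX n (D : 'I_n -> transition) : 'I_n -> S * A :=
  fun k => (tr_s (D k), tr_a (D k)).
Definition dataX' n (pi : S -> A) (D : 'I_n -> transition) : 'I_n -> S * A :=
  fun k => (tr_s' (D k), pi (tr_s' (D k))).
Definition dataR n (D : 'I_n -> transition) : 'cV[R]_n := \col_k tr_r (D k).

Definition evalv n (f : S * A -> R) (X : 'I_n -> S * A) : 'cV[R]_n :=
  \col_k f (X k).

Definition gram m n (Th : S * A -> S * A -> R) (X : 'I_m -> S * A)
  (Y : 'I_n -> S * A) : 'M[R]_(m, n) := \matrix_(i, j) Th (X i) (Y j).

Definition Cmat n (Th : S * A -> S * A -> R) (X X' : 'I_n -> S * A) : 'M[R]_n :=
  gram Th X' X *m invmx (gram Th X X).

(* Infinite-width NTK training to convergence (MSE, GD, small step) from the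
   initial network q0 on inputs X with targets y: the network becomes
   q0(x) + Theta(x, X) Theta(X, X)^{-1} (y - q0(X)). *)
Definition ntk_train n (Th : S * A -> S * A -> R) (X : 'I_n -> S * A)
  (q0 : S * A -> R) (y : 'cV[R]_n) : S * A -> R :=
  fun x => q0 x + ((\row_j Th x (X j)) *m invmx (gram Th X X) *m (y - evalv q0 X))
                    ord0 ord0.

Definition vnorm n (v : 'cV[R]_n) : R := \big[Num.max/0]_(k < n) `|v k ord0|.
Definition opnorm n (M : 'M[R]_n) : R :=
  \big[Num.max/0]_(i < n) \sum_(j < n) `|M i j|.

Definition geomsum n (g : R) (C : 'M[R]_n) (t : nat) : 'M[R]_n :=
  \sum_(k < t.+1) (g *: C) ^+ k.

Definition sqrtv n (v : 'cV[R]_n) : 'cV[R]_n := \col_k Num.sqrt (v k ord0).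

End Defs.

Section Prob.
Context {d : measure_display} {Z : measurableType d} {R : realType}.
Variable P : probability Z R.

Definition Ex (f : Z -> R) : R := Rintegral P setT f.
Definition Var (f : Z -> R) : R := Ex (fun z => (f z - Ex f) ^+ 2).

Variables (S A : Type).

Definition lcb (Q : Z -> S * A -> R) : S * A -> R :=
  fun x => Ex (fun z => Q z x) - Num.sqrt (Var (fun z => Q z x)).

Variables (n : nat) (Th : S * A -> S * A -> R) (pi : S -> A)
  (D : 'I_n -> transition S A R) (g : R) (Q0 : Z -> S * A -> R).

Fixpoint Qind (t : nat) : Z -> S * A -> R :=
  match t with
  | 0 => Q0
  | t'.+1 => fun z => ntk_train Th (dataX D) (Q0 z)
      (dataR D + g *: evalv (Qind t' z) (dataX' pi D))
  end.

Fixpoint Qshr (t : nat) : Z -> S * A -> R :=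
  match t with
  | 0 => Q0
  | t'.+1 => fun z => ntk_train Th (dataX D) (Q0 z)
      (dataR D + g *: evalv (lcb (Qshr t')) (dataX' pi D))
  end.

End Prob.

(* Main.v *)
Require Import Defs.
From HB Require Import structures.
From mathcomp Require Import all_boot all_order all_algebra.
From mathcomp Require Import all_classical all_reals all_analysis.
From mathcomp Require Import measurable_realfun.
From mathcomp Require Import ring lra.
Import Order.TTheory GRing.Theory Num.Theory.
Set Implicit Arguments. Unset Strict Implicit. Unset Printing Implicit Defensive.
Local Open Scope ring_scope.
Section ProbLemmas.
Context {d : measure_display} {Z : measurableType d} {R : realType}.
Variable P : probability Z R.

Lemma sqrn (x : R) : `|x| ^+ 2 = x ^+ 2.
Proof. exact: real_normK (num_real x). Qed.

Definition INT (f : Z -> R) := P.-integrable setT (EFin \o f).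
Definition L2 (f : Z -> R) := measurable_fun setT f /\ INT (fun z => f z ^+ 2).

Lemma INT_ext f g : INT f -> (forall z, f z = g z) -> INT g.
Proof. by move=> h e; have <- : f = g by apply: funext. Qed.

Lemma Ex_ext f g : (forall z, f z = g z) -> Ex P f = Ex P g.
Proof. by move=> e; have -> : f = g by apply: funext. Qed.

Lemma INT_cst c : INT (fun _ => c).
Proof. exact: finite_measure_integrable_cst. Qed.

Lemma INT_D f g : INT f -> INT g -> INT (fun z => f z + g z).
Proof.
move=> hf hg; apply: eq_integrable (integrableD _ hf hg) => //.
Qed.

Lemma INT_Z c f : INT f -> INT (fun z => c * f z).
Proof.
move=> hf; apply: eq_integrable (integrableZl _ c hf) => //.
Qed.

Lemma INT_sum (I : Type) (r : seq I) (F : I -> Z -> R) :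
  (forall i, INT (F i)) -> INT (fun z => \sum_(i <- r) F i z).
Proof.
move=> h; elim: r => [|i r ih].
  by apply: (@INT_ext (fun _ => 0)); [exact: INT_cst | move=> z; rewrite big_nil].
have H := INT_D (h i) ih.
refine (INT_ext H _).
by move=> z; rewrite big_cons.
Qed.

Lemma Ex_cst c : Ex P (fun _ => c) = c.
Proof.
rewrite /Ex Rintegral_cst //.
have e : fine (P [set: Z]%classic) = 1 by rewrite probability_setT.
change (c * fine (P [set: Z]%classic) = c).
by rewrite e mulr1.
Qed.

Lemma ExD f g : INT f -> INT g -> Ex P (fun z => f z + g z) = Ex P f + Ex P g.
Proof. by move=> hf hg; rewrite /Ex RintegralD. Qed.

Lemma ExZ c f : INT f -> Ex P (fun z => c * f z) = c * Ex P f.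
Proof. by move=> hf; rewrite /Ex RintegralZl. Qed.

Lemma Ex_sum (I : Type) (r : seq I) (F : I -> Z -> R) :
  (forall i, INT (F i)) -> Ex P (fun z => \sum_(i <- r) F i z) = \sum_(i <- r) Ex P (F i).
Proof.
move=> h; elim: r => [|i r ih].
  rewrite big_nil -[RHS](Ex_cst 0); apply: Ex_ext => z; by rewrite big_nil.
rewrite big_cons -ih -ExD //; last exact: INT_sum.
by apply: Ex_ext => z; rewrite big_cons.
Qed.

Lemma Ex_le f g : INT f -> INT g -> (forall z, f z <= g z) -> Ex P f <= Ex P g.
Proof. by move=> hf hg h; apply: le_Rintegral. Qed.

Lemma Ex_ge0 f : (forall z, 0 <= f z) -> 0 <= Ex P f.
Proof. by move=> h; apply: Rintegral_ge0. Qed.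

Lemma L2_INT f : L2 f -> INT f.
Proof.
move=> [mf hf].
have h1 : INT (fun z => 1 + f z ^+ 2) by apply: INT_D => //; exact: INT_cst.
apply: le_integrable h1 => //; first exact/measurable_EFinP.
move=> z _ /=; rewrite lee_fin.
rewrite (@ger0_norm _ (1 + _)); last by rewrite addr_ge0 // sqr_ge0.
have a0 := normr_ge0 (f z); rewrite -sqrn; nra.
Qed.

Lemma L2_INTM f g : L2 f -> L2 g -> INT (fun z => f z * g z).
Proof.
move=> [mf hf] [mg hg].
have h1 : INT (fun z => f z ^+ 2 + g z ^+ 2) by apply: INT_D.
apply: le_integrable h1 => //; first by apply/measurable_EFinP; exact: measurable_funM.
move=> z _ /=; rewrite lee_fin.
rewrite (@ger0_norm _ (_ + _)); last by rewrite addr_ge0 // sqr_ge0.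
rewrite normrM -(sqrn (f z)) -(sqrn (g z)).
have a0 := normr_ge0 (f z); have b0 := normr_ge0 (g z); nra.
Qed.

Lemma L2_D f g : L2 f -> L2 g -> L2 (fun z => f z + g z).
Proof.
move=> Hf Hg; have hm := L2_INTM Hf Hg.
case: Hf Hg => [mf hf] [mg hg]; split; first exact: measurable_funD.
have : INT (fun z => f z ^+ 2 + (2 * (f z * g z) + g z ^+ 2)).
  by apply: INT_D => //; apply: INT_D => //; exact: INT_Z.
by move=> h; apply: INT_ext h _ => z; ring.
Qed.

Lemma L2_Z c f : L2 f -> L2 (fun z => c * f z).
Proof.
move=> [mf hf]; split; first by apply: measurable_funM => //; exact: measurable_cst.
refine (INT_ext (INT_Z (c ^+ 2) hf) _) => z; ring.
Qed.

Lemma L2_cst c : L2 (fun _ => c).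
Proof. split; [exact: measurable_cst | exact: INT_cst]. Qed.

Definition cen f := L2 f /\ Ex P f = 0.

Lemma cen_D f g : cen f -> cen g -> cen (fun z => f z + g z).
Proof.
move=> [Lf ef] [Lg eg]; split; first exact: L2_D.
by rewrite ExD ?ef ?eg ?addr0 //; exact: L2_INT.
Qed.

Lemma cen_Z c f : cen f -> cen (fun z => c * f z).
Proof.
move=> [Lf ef]; split; first exact: L2_Z.
by rewrite ExZ ?ef ?mulr0 //; exact: L2_INT.
Qed.

Lemma cen_ext f g : cen f -> (forall z, f z = g z) -> cen g.
Proof. by move=> h e; have <- : f = g by apply: funext. Qed.

Lemma cen_B f g : cen f -> cen g -> cen (fun z => f z - g z).
Proof.
move=> cf cg; refine (cen_ext (cen_D cf (cen_Z (-1) cg)) _) => z; ring.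
Qed.

Lemma cen_sum (I : Type) (r : seq I) (F : I -> Z -> R) :
  (forall i, cen (F i)) -> cen (fun z => \sum_(i <- r) F i z).
Proof.
move=> h; elim: r => [|i r ih].
  refine (cen_ext (conj (L2_cst 0) (Ex_cst 0)) _) => z; by rewrite big_nil.
refine (cen_ext (cen_D (h i) ih) _) => z; by rewrite big_cons.
Qed.

Lemma expand f g c : L2 f -> L2 g ->
  Ex P (fun z => (f z + c * g z) ^+ 2) =
  Ex P (fun z => f z ^+ 2) + 2 * c * Ex P (fun z => f z * g z) + c ^+ 2 * Ex P (fun z => g z ^+ 2).
Proof.
move=> Hf Hg; have hm := L2_INTM Hf Hg.
case: Hf Hg => [mf hf] [mg hg].
rewrite (@Ex_ext _ (fun z => f z ^+ 2 + ((2 * c) * (f z * g z) + c ^+ 2 * g z ^+ 2))); last by move=> z; ring.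
rewrite ExD //; last by apply: INT_D; exact: INT_Z.
by rewrite ExD ?ExZ ?addrA //; exact: INT_Z.
Qed.

Lemma disc (a b c : R) : (forall l, 0 <= a + 2 * l * b + l ^+ 2 * c) ->
  0 <= a -> 0 <= c -> b ^+ 2 <= a * c.
Proof.
move=> H a0 c0; have [c00|cp] := eqVneq c 0.
  subst c; have [b0|bn] := eqVneq b 0; first by subst b; rewrite expr0n /= mulr0.
  have := H (- (a + 1) / (2 * b)).
  have -> : a + 2 * (- (a + 1) / (2 * b)) * b + (- (a + 1) / (2 * b)) ^+ 2 * 0 = -1.
    by field.
  by rewrite ler0N1.
have cpos : 0 < c by rewrite lt_def cp c0.
have := H (- b / c).
have e : a + 2 * (- b / c) * b + (- b / c) ^+ 2 * c = (a * c - b ^+ 2) / c by field.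
rewrite e => h; have : 0 <= (a * c - b ^+ 2) / c * c by rewrite mulr_ge0 // ltW.
by rewrite divfK // subr_ge0.
Qed.

Lemma CS f g : L2 f -> L2 g ->
  Ex P (fun z => f z * g z) <= Num.sqrt (Ex P (fun z => f z ^+ 2)) * Num.sqrt (Ex P (fun z => g z ^+ 2)).
Proof.
move=> Hf Hg.
have a0 : 0 <= Ex P (fun z => f z ^+ 2) by apply: Ex_ge0 => z; exact: sqr_ge0.
have c0 : 0 <= Ex P (fun z => g z ^+ 2) by apply: Ex_ge0 => z; exact: sqr_ge0.
have := @disc _ (Ex P (fun z => f z * g z)) _ _ a0 c0.
have H : forall l, 0 <= Ex P (fun z => f z ^+ 2) + 2 * l * Ex P (fun z => f z * g z) + l ^+ 2 * Ex P (fun z => g z ^+ 2).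
  by move=> l; rewrite -expand //; apply: Ex_ge0 => z; exact: sqr_ge0.
move=> /(_ H) h; rewrite -sqrtrM //.
apply: le_trans (ler_norm _) _; rewrite -sqrtr_sqr; exact: ler_wsqrtr.
Qed.

Lemma minkowski f g : L2 f -> L2 g ->
  Num.sqrt (Ex P (fun z => (f z + g z) ^+ 2)) <=
  Num.sqrt (Ex P (fun z => f z ^+ 2)) + Num.sqrt (Ex P (fun z => g z ^+ 2)).
Proof.
move=> Hf Hg.
have a0 : 0 <= Ex P (fun z => f z ^+ 2) by apply: Ex_ge0 => z; exact: sqr_ge0.
have c0 : 0 <= Ex P (fun z => g z ^+ 2) by apply: Ex_ge0 => z; exact: sqr_ge0.
have hc := CS Hf Hg.
rewrite (@Ex_ext _ (fun z => (f z + 1 * g z) ^+ 2)); last by move=> z; rewrite mul1r.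
rewrite expand //.
apply: le_trans (_ : Num.sqrt ((Num.sqrt (Ex P (fun z => f z ^+ 2)) + Num.sqrt (Ex P (fun z => g z ^+ 2))) ^+ 2) <= _).
  apply: ler_wsqrtr; rewrite sqrrD !sqr_sqrtr // expr1n mul1r mulr1.
  rewrite mulr2n; lra.
by rewrite sqrtr_sqr ger0_norm // addr_ge0 // sqrtr_ge0.
Qed.

End ProbLemmas.
Section Mat.
Context {R : realType}.

Lemma vnorm_ge0 n (v : 'cV[R]_n) : 0 <= vnorm v.
Proof.
rewrite /vnorm; elim/big_ind: _ => //;
try (by move=> x y hx hy; rewrite le_max hx); by move=> k _; exact: normr_ge0.
Qed.

Lemma vnorm_le n (v : 'cV[R]_n) B : 0 <= B -> (forall k, `|v k ord0| <= B) -> vnorm v <= B.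
Proof.
move=> B0 h; rewrite /vnorm; elim/big_ind: _ => //;
try (by move=> x y hx hy; rewrite ge_max hx hy).
Qed.

Lemma le_vnorm n (v : 'cV[R]_n) k : `|v k ord0| <= vnorm v.
Proof. by rewrite /vnorm (bigD1 k) //= le_max lexx. Qed.

Lemma opnorm_ge0 n (M : 'M[R]_n) : 0 <= opnorm M.
Proof.
rewrite /opnorm; elim/big_ind: _ => //;
try (by move=> x y hx hy; rewrite le_max hx); by move=> k _; apply: sumr_ge0 => j _; exact: normr_ge0.
Qed.

Lemma row_le_opnorm n (M : 'M[R]_n) i : \sum_j `|M i j| <= opnorm M.
Proof. by rewrite /opnorm [X in _ <= X](bigD1 i) //= le_max lexx. Qed.

Lemma vnorm_mul n (M : 'M[R]_n) v : vnorm (M *m v) <= opnorm M * vnorm v.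
Proof.
apply: vnorm_le; first by rewrite mulr_ge0 ?opnorm_ge0 ?vnorm_ge0.
move=> k; rewrite mxE.
apply: le_trans (ler_norm_sum _ _ _) _.
apply: le_trans (_ : \sum_j `|M k j| * vnorm v <= _).
  by apply: ler_sum => j _; rewrite normrM ler_wpM2l // le_vnorm.
by rewrite -mulr_suml ler_wpM2r ?vnorm_ge0 // row_le_opnorm.
Qed.

Lemma vnorm_scale n g (v : 'cV[R]_n) : 0 <= g -> vnorm (g *: v) <= g * vnorm v.
Proof.
move=> g0; apply: vnorm_le; first by rewrite mulr_ge0 ?vnorm_ge0.
by move=> k; rewrite mxE normrM ger0_norm // ler_wpM2l // le_vnorm.
Qed.

Lemma vnorm_pow n g (C : 'M[R]_n) v m : 0 <= g ->
  vnorm ((g *: C) ^+ m *m v) <= (g * opnorm C) ^+ m * vnorm v.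
Proof.
move=> g0; elim: m => [|m ih].
  by rewrite expr0 mul1mx mul1r.
rewrite exprS -mulmxE -mulmxA -scalemxAl.
apply: le_trans (vnorm_scale _ g0) _.
apply: le_trans (ler_wpM2l g0 (le_trans (vnorm_mul C _) (ler_wpM2l (opnorm_ge0 C) ih))) _.
by rewrite exprS !mulrA.
Qed.

Lemma geomS n g (C : 'M[R]_n) t : geomsum g C t.+1 = 1%:M + (g *: C) *m geomsum g C t.
Proof.
rewrite /geomsum big_ord_recl expr0 mulmx_sumr; congr (_ + _); apply: eq_bigr => i _.
have -> : (g *: C) ^+ (lift ord0 i) = (g *: C) ^+ i.+1 by rewrite lift0.
by rewrite exprS mulmxE.
Qed.

Lemma rec_closed n g (C : 'M[R]_n) (a : 'cV[R]_n) (V : nat -> 'cV[R]_n) :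
  (forall t, V t.+1 = a + (g *: C) *m V t) ->
  forall t, V t.+1 = geomsum g C t *m a + (g *: C) ^+ t.+1 *m V 0%N.
Proof.
move=> H; elim => [|t ih].
  by rewrite H /geomsum big_ord1 expr0 mul1mx expr1.
have e : (g *: C) *m (g *: C) ^+ t.+1 = (g *: C) ^+ t.+2 by rewrite [RHS]exprS mulmxE.
rewrite H ih geomS mulmxDl mul1mx mulmxDr !mulmxA e addrA. reflexivity.
Qed.

End Mat.
Lemma evalv_ntk (S A : Type) (R : realType) n (Th : S * A -> S * A -> R)
  (X X' : 'I_n -> S * A) (q0 : S * A -> R) (y : 'cV[R]_n) :
  evalv (ntk_train Th X q0 y) X' = evalv q0 X' + Cmat Th X X' *m (y - evalv q0 X).
Proof.
apply/matrixP => k j; rewrite (ord1 j) [LHS]mxE [RHS]mxE /ntk_train.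
congr (_ + _); first by rewrite mxE.
have h : (\row_j0 Th (X' k) (X j0)) = row k (gram Th X' X) by apply/rowP => j0; rewrite !mxE.
by rewrite h -!row_mul mxE /Cmat.
Qed.
Lemma zmod4 (V : zmodType) (a b c d : V) : a + (b + c - d) = a - d + b + c.
Proof. by rewrite !addrA (addrAC a (-d) b) (addrAC (a + b) (-d) c). Qed.

Lemma addE (R : realType) m n (A B : 'M[R]_(m, n)) i j : (A + B) i j = A i j + B i j.
Proof. by rewrite mxE. Qed.

Lemma subE (R : realType) m n (A B : 'M[R]_(m, n)) i j : (A - B) i j = A i j - B i j.
Proof. by rewrite !mxE. Qed.

Lemma vnorm_sq (R : realType) n (v : 'cV[R]_n) : vnorm v ^+ 2 <= \sum_j v j ord0 ^+ 2.
Proof.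
have hs : 0 <= \sum_j v j ord0 ^+ 2 by apply: sumr_ge0 => j _; exact: sqr_ge0.
rewrite -(sqr_sqrtr hs) ler_sqr ?nnegrE ?vnorm_ge0 ?sqrtr_ge0 //.
apply: vnorm_le; first exact: sqrtr_ge0.
move=> k; rewrite -(sqrtr_sqr (v k ord0)); apply: ler_wsqrtr.
by rewrite (bigD1 k) //= lerDl; apply: sumr_ge0 => j _; exact: sqr_ge0.
Qed.
Lemma sqrtvE (R : realType) n (v : 'cV[R]_n) k : sqrtv v k ord0 = Num.sqrt (v k ord0).
Proof. by rewrite mxE. Qed.

Theorem theorem1 (d : measure_display) (Z : measurableType d) (R : realType)
  (P : probability Z R) (S A : Type) (n : nat)
  (D : 'I_n -> transition S A R) (pi : S -> A) (gamma : R)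
  (Th : S * A -> S * A -> R) (Q0 : Z -> S * A -> R) :
  0 <= gamma -> gamma < 1 ->
  gram Th (dataX D) (dataX D) \in unitmx ->
  gamma * opnorm (Cmat Th (dataX D) (dataX' pi D)) < 1 ->
  (forall x, measurable_fun setT (fun z => Q0 z x)) ->
  (forall x, P.-integrable setT (fun z => ((Q0 z x) ^+ 2)%:E)) ->
  (forall x, Ex P (fun z => Q0 z x) = 0) ->
  let X := dataX D in
  let X' := dataX' pi D in
  let Rv := dataR D in
  let C := Cmat Th X X' in
  let u := fun z => evalv (Q0 z) X' - C *m evalv (Q0 z) X in
  (exists K : R, forall t : nat,
     vnorm (evalv (lcb P (Qind Th pi D gamma Q0 t.+1)) X'
            - (geomsum gamma C t *m C *m Rv
               - sqrtv (\col_k Ex P (fun z => ((geomsum gamma C t *m u z) k ord0) ^+ 2))))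
     <= K * (gamma * opnorm C) ^+ t)
  /\
  (exists K : R, forall t : nat,
     vnorm (evalv (lcb P (Qshr P Th pi D gamma Q0 t.+1)) X'
            - (geomsum gamma C t *m C *m Rv
               - geomsum gamma C t *m sqrtv (\col_k Ex P (fun z => (u z k ord0) ^+ 2))))
     <= K * (gamma * opnorm C) ^+ t).
Proof.
move=> g0 g1 hG hr mQ iQ eQ X X' Rv C u.
have r0 : 0 <= gamma * opnorm C by rewrite mulr_ge0 // opnorm_ge0.
have r1 : gamma * opnorm C <= 1 by apply: ltW.
have cQ : forall x, cen P (fun z => Q0 z x).
  by move=> x; split; [split; [exact: mQ | exact: iQ] | exact: eQ].
have clin : forall (B : 'M[R]_n) (Y : 'I_n -> S * A) k,
    cen P (fun z => (B *m evalv (Q0 z) Y) k ord0).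
  move=> B Y k.
  refine (cen_ext (@cen_sum _ _ _ P _ (index_enum 'I_n)
    (fun j z => B k j * Q0 z (Y j)) (fun j => cen_Z _ (cQ _))) _) => z.
  by rewrite mxE; apply: eq_bigr => j _; rewrite mxE.
have hstep : forall (y : 'cV[R]_n) z,
    evalv (ntk_train Th (dataX D) (Q0 z) (Rv + gamma *: y)) X'
    = (u z + C *m Rv) + (gamma *: C) *m y.
  move=> y z; rewrite evalv_ntk mulmxBr mulmxDr -scalemxAl -scalemxAr.
  by rewrite zmod4.
have cu : forall (B : 'M[R]_n) k, cen P (fun z => (B *m u z) k ord0).
  move=> B k; refine (cen_ext (cen_B (clin B X' k) (clin (B *m C) X k)) _) => z.
  by rewrite /u mulmxBr subE (mulmxA B C).
split.
-
  set YY := fun z => \sum_j (evalv (Q0 z) X') j ord0 ^+ 2.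
  have iYY : INT P YY.
    refine (INT_ext (@INT_sum _ _ _ P _ (index_enum 'I_n)
      (fun j z => Q0 z (X' j) ^+ 2) (fun j => iQ _)) _) => z.
    by rewrite /YY; apply: eq_bigr => j _; rewrite mxE.
  exists (Num.sqrt (Ex P YY)) => t.
  set Sg := geomsum gamma C t.
  set M := (gamma *: C) ^+ t.+1.
  set rho := gamma * opnorm C.
  have hV : forall z, evalv (Qind Th pi D gamma Q0 t.+1 z) X' =
      Sg *m (u z + C *m Rv) + M *m evalv (Q0 z) X'.
    move=> z.
    exact: (@rec_closed _ n gamma C (u z + C *m Rv)
       (fun s => evalv (Qind Th pi D gamma Q0 s z) X') (fun s => hstep _ z) t).
  apply: vnorm_le; first by rewrite mulr_ge0 ?sqrtr_ge0 ?exprn_ge0.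
  move=> k.
  set w := fun z => (Sg *m u z) k ord0.
  set c := (Sg *m C *m Rv) k ord0.
  set v := fun z => (M *m evalv (Q0 z) X') k ord0.
  have hQ : (fun z => Qind Th pi D gamma Q0 t.+1 z (X' k)) = (fun z => w z + c + v z).
    apply: funext => z.
    have := congr1 (fun m : 'cV[R]_n => m k ord0) (hV z).
    rewrite /= mxE => ->.
    by rewrite mulmxDr mulmxA !addE.
  have cw : cen P w by exact: cu.
  have cv : cen P v by exact: clin.
  have Ewcv : Ex P (fun z => w z + c + v z) = c.
    rewrite (@Ex_ext _ _ _ P _ (fun z => c + (w z + v z))); last by move=> z; rewrite addrAC addrC.
    have [Lwv Ewv] := cen_D cw cv.
    by rewrite ExD ?Ex_cst ?Ewv ?addr0 //; [exact: INT_cst | exact: L2_INT].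
  have Vr : Var P (fun z => w z + c + v z) = Ex P (fun z => (w z + v z) ^+ 2).
    rewrite /Var Ewcv; apply: Ex_ext => z; congr (_ ^+ 2); by rewrite addrAC addrK.
  rewrite subE mxE /lcb hQ Ewcv Vr subE -/c sqrtvE.
  rewrite (_ : (\col_k0 _) k ord0 = Ex P (fun z => w z ^+ 2)); last by rewrite mxE.
  have [Lw _] := cw; have [Lv _] := cv.
  have m1 := minkowski Lw Lv.
  have LwN : L2 P (fun z => (-1) * v z) by exact: L2_Z.
  have m2 := minkowski (L2_D Lw Lv) LwN.
  rewrite (@Ex_ext _ _ _ P _ (fun z => w z ^+ 2)) in m2; last by move=> z; congr (_ ^+ 2); rewrite mulN1r addrK.
  rewrite (@Ex_ext _ _ _ P (fun z => (-1 * v z) ^+ 2) (fun z => v z ^+ 2)) in m2; last by move=> z; rewrite mulN1r sqrrN.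
  have hv : Num.sqrt (Ex P (fun z => v z ^+ 2)) <= rho ^+ t.+1 * Num.sqrt (Ex P YY).
    have hpt : forall z, v z ^+ 2 <= rho ^+ t.+1 ^+ 2 * YY z.
      move=> z.
      have h1 : `|v z| <= rho ^+ t.+1 * vnorm (evalv (Q0 z) X').
        exact: le_trans (le_vnorm _ k) (vnorm_pow _ _ _ g0).
      have h2 := vnorm_sq (evalv (Q0 z) X').
      have h3 := vnorm_ge0 (evalv (Q0 z) X').
      have h4 : 0 <= rho ^+ t.+1 by rewrite exprn_ge0.
      have h5 := normr_ge0 (v z).
      rewrite -sqrn; rewrite -/(YY z) in h2.
      apply: le_trans (_ : (rho ^+ t.+1 * vnorm (evalv (Q0 z) X')) ^+ 2 <= _).
        by rewrite ler_sqr ?nnegrE // mulr_ge0.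
      by rewrite exprMn ler_wpM2l // sqr_ge0.
    have : Ex P (fun z => v z ^+ 2) <= Ex P (fun z => rho ^+ t.+1 ^+ 2 * YY z).
      apply: Ex_le => //; [by case: Lv | exact: INT_Z].
    rewrite ExZ // => hE.
    apply: le_trans (ler_wsqrtr hE) _.
    by rewrite sqrtrM ?sqr_ge0 // sqrtr_sqr ger0_norm // exprn_ge0.
  have ht : rho ^+ t.+1 <= rho ^+ t by rewrite exprS ler_piMl // exprn_ge0.
  have hK : 0 <= Num.sqrt (Ex P YY) by exact: sqrtr_ge0.
  have : rho ^+ t.+1 * Num.sqrt (Ex P YY) <= Num.sqrt (Ex P YY) * rho ^+ t.
    by rewrite mulrC ler_wpM2l.
  move=> h6.
  rewrite ler_norml; apply/andP; split; lra.
-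
  set sv := sqrtv (\col_k Ex P (fun z => (u z k ord0) ^+ 2)).
  pose L := fun s => evalv (lcb P (Qshr P Th pi D gamma Q0 s)) X'.
  have HL : forall s, L s.+1 = (C *m Rv - sv) + (gamma *: C) *m L s.
    move=> s; apply/matrixP => k j; rewrite (ord1 j).
    set c' := (C *m Rv + (gamma *: C) *m L s) k ord0.
    have hq : (fun z => Qshr P Th pi D gamma Q0 s.+1 z (X' k)) = (fun z => u z k ord0 + c').
      apply: funext => z.
      transitivity ((evalv (ntk_train Th (dataX D) (Q0 z) (Rv + gamma *: L s)) X') k ord0).
        by rewrite mxE.
      by rewrite hstep -addrA addE.
    have cuk : cen P (fun z => u z k ord0).
      by refine (cen_ext (cu 1%:M k) _) => z; rewrite mul1mx.
    have [Luk Euk] := cuk.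
    have E1 : Ex P (fun z => u z k ord0 + c') = c'.
      by rewrite ExD ?Euk ?Ex_cst ?add0r //; [exact: L2_INT | exact: INT_cst].
    rewrite mxE /lcb hq E1 /Var E1.
    rewrite (@Ex_ext _ _ _ P _ (fun z => u z k ord0 ^+ 2)); last by move=> z; rewrite addrK.
    rewrite addE subE sqrtvE mxE /c' addE; ring.
  have hLc := rec_closed HL.
  exists (vnorm (L 0%N)) => t.
  change (vnorm (L t.+1 - (geomsum gamma C t *m C *m Rv - geomsum gamma C t *m sv)) <=
     vnorm (L 0%N) * (gamma * opnorm C) ^+ t).
  rewrite hLc mulmxBr mulmxA addrC addKr.
  apply: le_trans (vnorm_pow _ _ _ g0) _.
  rewrite mulrC ler_wpM2l ?vnorm_ge0 //.
  by rewrite exprS ler_piMl // exprn_ge0.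
Qed.
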